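(* Let $\Lambda\in P^+$ and let $\beta=\alpha_{j_1}+\dots+\alpha_{j_n}$ with $j_1,\dots,j_n\in I$ pairwise distinct. Then the center $\mathcal{Z}$ of $R^\Lambda(\beta)$ satisfies $\mathcal{Z}\subseteq\bigoplus_{\mu\in I^\beta}\mathcal{P}_\mu e(\mu)$, where $\mathcal{P}_\mu e(\mu)$ denotes the $\mathbf{k}$-span in $R^\Lambda(\beta)$ of all elements $x_1^{t_1}\cdots x_n^{t_n}e(\mu)$, $t_i\in\mathbb{Z}_{\ge0}$.
   Context: Fix a field $\mathbf{k}$ of characteristic $\neq 2$. A Cartan superdatum consists of an index set $I$; a symmetrizable generalized Cartan matrix $A=(a_{ij})_{i,j\in I}$ ($a_{ii}=2$, $a_{ij}\le 0$ for $i\ne j$, $a_{ij}=0\iff a_{ji}=0$, positive integers $d_i$ with $d_ia_{ij}=d_ja_{ji}$); a free abelian group $P$; $\mathbb{Z}$-linearly independent $\alpha_i\in P$; $h_i\in\mathrm{Hom}_{\mathbb{Z}}(P,\mathbb{Z})$ with $\langle h_i,\alpha_j\rangle=a_{ij}$; and $I=I_{\mathrm{even}}\sqcup I_{\mathrm{odd}}$ with $a_{ij}\in2\mathbb{Z}$ whenever $i\in I_{\mathrm{odd}}$. A symmetric bilinear form $(\cdot|\cdot)$ on $P$ satisfies $(\alpha_i|\lambda)=d_i\langle h_i,\lambda\rangle$. Parity $\mathrm{p}(i)=1$ if $i\in I_{\mathrm{odd}}$, $0$ otherwise. $P^+=\{\Lambda:\langle h_i,\Lambda\rangle\ge0\ \forall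 i\}$; $I^\beta=\{\nu\in I^n:\sum_s\alpha_{\nu_s}=\beta\}$. For $\nu\in I^n$, $\mathcal{P}_\nu=\mathbf{k}\langle\mathrm{x}_1,\dots,\mathrm{x}_n\rangle/(\mathrm{x}_a\mathrm{x}_b-(-1)^{\mathrm{p}(\nu_a)\mathrm{p}(\nu_b)}\mathrm{x}_b\mathrm{x}_a)$. Fix $Q_{ij}(\mathrm{x}_1,\mathrm{x}_2)=\sum_{r,s}t_{i,j;(r,s)}\mathrm{x}_1^r\mathrm{x}_2^s\in\mathcal{P}_{(i,j)}$ with: $t_{i,j;(r,s)}\ne0$ only if $-2(\alpha_i|\alpha_j)-r(\alpha_i|\alpha_i)-s(\alpha_j|\alpha_j)=0$; $t_{i,j;(r,s)}=t_{j,i;(s,r)}$; $t_{i,j;(-a_{ij},0)}\in\mathbf{k}^\times$; $t_{i,j;(r,s)}=0$ if $i=j$ or ($i\in I_{\mathrm{odd}}$ and $r$ odd). $R(\beta)$ is the $\mathbf{k}$-algebra with generators $e(\nu)$ ($\nu\in I^\beta$), $x_1,\dots,x_n$, $\tau_1,\dots,\tau_{n-1}$ and relations: $e(\mu)e(\nu)=\delta_{\mu\nu}e(\nu)$, $\sum_\nu e(\nu)=1$; $x_px_qe(\nu)=(-1)^{\mathrm{p}(\nu_p)\mathrm{p}(\nu_q)}x_qx_pe(\nu)$ ($p\ne q$); $x_pe(\nu)=e(\nu)x_p$; $\tau_ae(\nu)=e(s_a\nu)\tau_a$; $\tau_ax_pe(\nu)=(-1)^{\mathrm{p}(\nu_p)\mathrm{p}(\nu_a)\mathrm{p}(\nu_{a+1})}x_p\tau_ae(\nu)$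 ($p\ne a,a+1$); $(\tau_ax_{a+1}-(-1)^{\mathrm{p}(\nu_a)\mathrm{p}(\nu_{a+1})}x_a\tau_a)e(\nu)=(x_{a+1}\tau_a-(-1)^{\mathrm{p}(\nu_a)\mathrm{p}(\nu_{a+1})}\tau_ax_a)e(\nu)=\delta_{\nu_a,\nu_{a+1}}e(\nu)$; $\tau_a^2e(\nu)=Q_{\nu_a,\nu_{a+1}}(x_a,x_{a+1})e(\nu)$; $\tau_a\tau_be(\nu)=(-1)^{\mathrm{p}(\nu_a)\mathrm{p}(\nu_{a+1})\mathrm{p}(\nu_b)\mathrm{p}(\nu_{b+1})}\tau_b\tau_ae(\nu)$ ($|a-b|>1$); $(\tau_{a+1}\tau_a\tau_{a+1}-\tau_a\tau_{a+1}\tau_a)e(\nu)$ equals $\frac{Q_{\nu_a,\nu_{a+1}}(x_{a+2},x_{a+1})-Q_{\nu_a,\nu_{a+1}}(x_a,x_{a+1})}{x_{a+2}-x_a}e(\nu)$ if $\nu_a=\nu_{a+2}\in I_{\mathrm{even}}$, $(-1)^{\mathrm{p}(\nu_{a+1})}(x_{a+2}-x_a)\frac{Q_{\nu_a,\nu_{a+1}}(x_{a+2},x_{a+1})-Q_{\nu_a,\nu_{a+1}}(x_a,x_{a+1})}{x_{a+2}^2-x_a^2}e(\nu)$ if $\nu_a=\nu_{a+2}\in I_{\mathrm{odd}}$, $0$ otherwise; $s_a=(a,a+1)$, and $\mathfrak{S}_n$ acts on $I^n$ by $(w\nu)_j=\nu_{w^{-1}(j)}$. For $\Lambda\in P^+$,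 $R^\Lambda(\beta)=R(\beta)/\langle\sum_{\nu}x_1^{\langle h_{\nu_1},\Lambda\rangle}e(\nu)\rangle$. *)

(* Defs.v *)
From HB Require Import structures.
From mathcomp Require Import all_boot all_order all_algebra.
Set Implicit Arguments.
Unset Strict Implicit.
Unset Printing Implicit Defensive.
Import Order.TTheory GRing.Theory Num.Theory.
Local Open Scope ring_scope.

(* The weight lattice P is the free abelian group 'rV[int]_m,          *)
(* h_i in Hom(P,Z) is given by a column vector: <h_i, lam> = lam *m h_i *)

Definition pairing (m : nat) (h : 'cV[int]_m) (lam : 'rV[int]_m) : int :=
  (lam *m h) 0 0.

Definition bform (m : nat) (B : 'M[int]_m) (u v : 'rV[int]_m) : int :=
  (u *m B *m v^T) 0 0.

Definition cartan_superdatum (I : finType) (a : I -> I -> int) (d : I -> nat)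
  (m : nat) (alpha : I -> 'rV[int]_m) (h : I -> 'cV[int]_m) (par : I -> bool) : Prop :=
  (forall i, a i i = 2) /\
  (forall i j, i != j -> a i j <= 0) /\
  (forall i j, a i j = 0 <-> a j i = 0) /\
  (forall i, (0 < d i)%N) /\
  (forall i j, (d i)%:Z * a i j = (d j)%:Z * a j i) /\
  (forall c : I -> int, \sum_(i : I) c i *: alpha i = 0 -> forall i, c i = 0) /\
  (forall i j, pairing (h i) (alpha j) = a i j) /\
  (forall i j, par i -> (2 %| a i j)%Z).

Definition compatible_form (I : finType) (d : I -> nat) (m : nat)
  (alpha : I -> 'rV[int]_m) (h : I -> 'cV[int]_m) (B : 'M[int]_m) : Prop :=
  B^T = B /\ forall i lam, bform B (alpha i) lam = (d i)%:Z * pairing (h i) lam.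

Definition Q_coeffs (k : fieldType) (I : finType) (a : I -> I -> int) (m : nat)
  (alpha : I -> 'rV[int]_m) (B : 'M[int]_m) (par : I -> bool)
  (t : I -> I -> nat -> nat -> k) : Prop :=
  [/\ (forall i j r s, t i j r s != 0 ->
         - 2 * bform B (alpha i) (alpha j) - r%:Z * bform B (alpha i) (alpha i)
           - s%:Z * bform B (alpha j) (alpha j) = 0),
      (forall i j r s, t i j r s = t j i s r),
      (forall i j, i != j -> t i j `|a i j|%N 0 != 0),
      (forall i r s, t i i r s = 0) &
      (forall i j r s, par i -> odd r -> t i j r s = 0) ].

(* Positions are 0-based: x p (p < n) is x_{p+1}, tau a (a+1 < n) is   *)
(* tau_{a+1}, swapping positions a and a+1.                            *)

Definition sgn (k : pzRingType) (b : bool) : k := if b then -1 else 1.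

Definition parv (I : Type) (par : I -> bool) (nu : seq I) (p : nat) : bool :=
  if onth nu p is Some i then par i else false.

Definition swapnat (a p : nat) : nat :=
  if p == a then a.+1 else if p == a.+1 then a else p.

Definition tswap (I : Type) (n : nat) (a : nat) (nu : n.-tuple I) : n.-tuple I :=
  [tuple tnth nu (insubd k (swapnat a k)) | k < n].

Definition Ibeta (I : Type) (m n : nat) (alpha : I -> 'rV[int]_m)
  (beta : 'rV[int]_m) (nu : n.-tuple I) : bool :=
  \sum_(i <- nu) alpha i == beta.

(* Q_{ij}(X, Y) = sum t_{i,j;(r,s)} X^r Y^s; the support is contained in
   r <= |a_ij|, s <= |a_ji| by the degree condition. *)
Definition Qpol (k : fieldType) (A : algType k) (I : Type) (a : I -> I -> int)
  (t : I -> I -> nat -> nat -> k) (i j : I) (X Y : A) : A :=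
  \sum_(r < `|a i j|.+1) \sum_(s < `|a j i|.+1)
     t i j r s *: (X ^+ r * Y ^+ s).

(* (Q_ij(X,Y) - Q_ij(Z,Y)) / (X - Z), computed in the commutative
   subalgebra generated by X, Z, Y (case nu_a = nu_{a+2} even) *)
Definition DQeven (k : fieldType) (A : algType k) (I : Type) (a : I -> I -> int)
  (t : I -> I -> nat -> nat -> k) (i j : I) (X Z Y : A) : A :=
  \sum_(r < `|a i j|.+1) \sum_(s < `|a j i|.+1)
     t i j r s *: ((\sum_(q < r) X ^+ q * Z ^+ (r.-1 - q)) * Y ^+ s).

(* (Q_ij(X,Y) - Q_ij(Z,Y)) / (X^2 - Z^2), where only even r occur
   (case nu_a = nu_{a+2} odd; X^2, Z^2, Y pairwise commute) *)
Definition DQodd (k : fieldType) (A : algType k) (I : Type) (a : I -> I -> int)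
  (t : I -> I -> nat -> nat -> k) (i j : I) (X Z Y : A) : A :=
  \sum_(r < `|a i j|.+1) \sum_(s < `|a j i|.+1)
     t i j r s *: ((\sum_(q < r./2) (X ^+ 2) ^+ q * (Z ^+ 2) ^+ (r./2.-1 - q))
                   * Y ^+ s).

(* lamh i = <h_i, Lambda>                                              *)
Definition cycQH_rels (k : fieldType) (I : finType) (a : I -> I -> int)
  (par : I -> bool) (t : I -> I -> nat -> nat -> k) (lamh : I -> nat)
  (m : nat) (alpha : I -> 'rV[int]_m) (beta : 'rV[int]_m) (n : nat)
  (B : algType k) (e : n.-tuple I -> B) (x : nat -> B) (tau : nat -> B) : Prop :=
  let Ib := Ibeta alpha beta in
  let pv (nu : n.-tuple I) := parv par nu in
      (forall mu nu, Ib mu -> Ib nu -> e mu * e nu = if mu == nu then e nu else 0) /\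
      (\sum_(nu | Ib nu) e nu = 1) /\
      (forall nu p q, Ib nu -> (p < n)%N -> (q < n)%N -> p != q ->
         x p * x q * e nu = sgn k (pv nu p && pv nu q) *: (x q * x p * e nu)) /\
      (forall nu p, Ib nu -> (p < n)%N -> x p * e nu = e nu * x p) /\
      (forall nu a0, Ib nu -> (a0.+1 < n)%N -> tau a0 * e nu = e (tswap a0 nu) * tau a0) /\
      (forall nu a0 p, Ib nu -> (a0.+1 < n)%N -> (p < n)%N -> p != a0 -> p != a0.+1 ->
         tau a0 * x p * e nu
         = sgn k [&& pv nu p, pv nu a0 & pv nu a0.+1] *: (x p * tau a0 * e nu)) /\
      (forall nu a0, Ib nu -> (a0.+1 < n)%N ->
         (tau a0 * x a0.+1 - sgn k (pv nu a0 && pv nu a0.+1) *: (x a0 * tau a0)) * e nu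
         = (if onth nu a0 == onth nu a0.+1 then e nu else 0)
      /\ (x a0.+1 * tau a0 - sgn k (pv nu a0 && pv nu a0.+1) *: (tau a0 * x a0)) * e nu
         = (if onth nu a0 == onth nu a0.+1 then e nu else 0)) /\
      (forall nu a0 i j, Ib nu -> (a0.+1 < n)%N ->
         onth nu a0 = Some i -> onth nu a0.+1 = Some j ->
         tau a0 ^+ 2 * e nu = Qpol a t i j (x a0) (x a0.+1) * e nu) /\
      (forall nu a0 b, Ib nu -> (a0.+1 < n)%N -> (b.+1 < n)%N ->
         (a0.+1 < b)%N || (b.+1 < a0)%N ->
         tau a0 * tau b * e nu
         = sgn k [&& pv nu a0, pv nu a0.+1, pv nu b & pv nu b.+1] *: (tau b * tau a0 * e nu)) /\
      (forall nu a0 i j, Ib nu -> (a0.+2 < n)%N ->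
         onth nu a0 = Some i -> onth nu a0.+1 = Some j ->
         (tau a0.+1 * tau a0 * tau a0.+1 - tau a0 * tau a0.+1 * tau a0) * e nu
         = (if onth nu a0.+2 == Some i then
              (if par i then
                 sgn k (par j) *: ((x a0.+2 - x a0) * DQodd a t i j (x a0.+2) (x a0) (x a0.+1))
               else DQeven a t i j (x a0.+2) (x a0) (x a0.+1)) * e nu
            else 0)) /\
      (\sum_(nu | Ib nu) (if onth nu 0 is Some i then x 0 ^+ lamh i * e nu else 0) = 0).

Definition generated_by (k : fieldType) (A : algType k) (G : A -> Prop) : Prop :=
  forall S : A -> Prop,
    S 1 -> (forall u v, S u -> S v -> S (u + v)) ->
    (forall u v, S u -> S v -> S (u * v)) -> (forall c u, S u -> S (c *: u)) ->
    (forall g, G g -> S g) -> forall y, S y.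

Definition alg_morph (k : fieldType) (A B : algType k) (f : A -> B) : Prop :=
  [/\ f 1 = 1, (forall u v, f (u + v) = f u + f v),
      (forall u v, f (u * v) = f u * f v) & (forall c u, f (c *: u) = c *: f u)].

(* (A, e, x, tau) is the k-algebra presented by the generators
   e(nu) (nu in I^beta), x_1..x_n, tau_1..tau_{n-1} and the relations of
   R^Lambda(beta): the relations hold, the generators generate A, and A has
   the universal property w.r.t. any k-algebra with such elements. *)
Definition is_cycQH (k : fieldType) (I : finType) (a : I -> I -> int)
  (par : I -> bool) (t : I -> I -> nat -> nat -> k) (lamh : I -> nat)
  (m : nat) (alpha : I -> 'rV[int]_m) (beta : 'rV[int]_m) (n : nat)
  (A : algType k) (e : n.-tuple I -> A) (x : nat -> A) (tau : nat -> A) : Prop :=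
  [/\ cycQH_rels a par t lamh alpha beta e x tau,
      generated_by (fun g : A => (exists2 nu, Ibeta alpha beta nu & g = e nu)
                               \/ (exists2 p, (p < n)%N & g = x p)
                               \/ (exists2 a0, (a0.+1 < n)%N & g = tau a0)) &
      (forall (B : algType k) (e' : n.-tuple I -> B) (x' tau' : nat -> B),
         cycQH_rels a par t lamh alpha beta e' x' tau' ->
         exists f : A -> B, [/\ alg_morph f,
           (forall nu, Ibeta alpha beta nu -> f (e nu) = e' nu),
           (forall p, (p < n)%N -> f (x p) = x' p) &
           (forall a0, (a0.+1 < n)%N -> f (tau a0) = tau' a0)])].

(* z lies in  (+)_{mu in I^beta} P_mu e(mu) : a finite k-linear combination
   of elements x_1^{t_1} ... x_n^{t_n} e(mu), mu in I^beta *)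
Definition in_sum_Pe (k : fieldType) (I : finType) (m : nat)
  (alpha : I -> 'rV[int]_m) (beta : 'rV[int]_m) (n : nat)
  (A : algType k) (e : n.-tuple I -> A) (x : nat -> A) (z : A) : Prop :=
  exists (N : nat) (c : n.-tuple I -> n.-tuple 'I_N -> k),
    z = \sum_(mu | Ibeta alpha beta mu) \sum_(tt : n.-tuple 'I_N)
          c mu tt *: ((\prod_(p < n) x p ^+ tnth tt p) * e mu).

(* Submission.v *)
Require Import Defs.
From HB Require Import structures.
From mathcomp Require Import all_boot all_order all_algebra.
Import Order.TTheory GRing.Theory Num.Theory.
Local Open Scope ring_scope.
From mathcomp Require Import zify.
Set Implicit Arguments.
Unset Strict Implicit.
Unset Printing Implicit Defensive.

Lemma onth_tnth (T : Type) n (s : n.-tuple T) (i : 'I_n) : onth s i = Some (tnth s i).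
Proof.
rewrite onthE (nth_map (tnth s i)); last by rewrite size_tuple.
by rewrite -tnth_nth.
Qed.

Lemma swapnat_lt n a p : (a.+1 < n)%N -> (p < n)%N -> (swapnat a p < n)%N.
Proof.
move=> ha hp; rewrite /swapnat; case: ifP => _ //.
by case: ifP => _ //; apply: ltnW.
Qed.

Lemma onth_tswap (T : Type) n a (nu : n.-tuple T) p : (a.+1 < n)%N ->
  onth (tswap a nu) p = onth nu (swapnat a p).
Proof.
move=> ha.
case: (ltnP p n) => hp.
  have := onth_tnth (tswap a nu) (Ordinal hp).
  rewrite /= => ->; rewrite tnth_mktuple.
  have hs := swapnat_lt ha hp.
  rewrite (onth_tnth nu (Ordinal hs)); congr Some; congr tnth.
  by apply: val_inj; rewrite /= /insubd insubT.
rewrite onth_default ?size_tuple //.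
have -> : swapnat a p = p.
  by rewrite /swapnat; case: eqP => ?; [lia | case: eqP => ?; [lia|]].
by rewrite onth_default ?size_tuple.
Qed.

Lemma swapnat_a a : swapnat a a = a.+1.
Proof. by rewrite /swapnat eqxx. Qed.
Lemma swapnat_a1 a : swapnat a a.+1 = a.
Proof. by rewrite /swapnat eqxx; case: eqP => //; lia. Qed.
Lemma swapnat_o a p : p <> a -> p <> a.+1 -> swapnat a p = p.
Proof. by rewrite /swapnat; case: eqP => // _; case: eqP. Qed.
Lemma swapnatK a p : swapnat a (swapnat a p) = p.
Proof. by rewrite /swapnat; repeat case: eqP; lia. Qed.

Lemma swapnat_ltE n a p : (a.+1 < n)%N -> (swapnat a p < n)%N = (p < n)%N.
Proof. by move=> ha; rewrite /swapnat; repeat case: eqP; lia. Qed.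

Lemma map_Some_onth (T : Type) (s : seq T) :
  map Some s = map (onth s) (iota 0 (size s)).
Proof.
rewrite -{1}[map Some s](mkseq_nth None) size_map /mkseq.
by apply: eq_map => i; rewrite onthE.
Qed.

Lemma perm_tswap (T : eqType) n a (nu : n.-tuple T) : (a.+1 < n)%N ->
  perm_eq (tswap a nu) nu.
Proof.
move=> ha; apply: (@perm_map_inj _ _ Some); first by move=> ? ? [].
rewrite !map_Some_onth !size_tuple.
rewrite (eq_map (fun p => onth_tswap nu p ha)).
have -> : map (fun p => onth nu (swapnat a p)) (iota 0 n) =
  map (onth nu) (map (swapnat a) (iota 0 n)) by rewrite -map_comp.
apply: perm_map; apply: uniq_perm.
- rewrite map_inj_uniq ?iota_uniq //; exact: (can_inj (swapnatK a)).
- exact: iota_uniq.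
move=> i; rewrite -{1}(swapnatK a i) (mem_map (can_inj (swapnatK a))).
by rewrite !mem_iota !add0n swapnat_ltE.
Qed.

Section Comb.
Variables (I : eqType) (n : nat) (mu : n.-tuple I).
Hypothesis umu : uniq mu.

Definition key (nu : n.-tuple I) p := index (onth nu p) (map Some mu).
Definition invd (nu : n.-tuple I) b := (key nu b.+1 < key nu b)%N.
Definition act (W : seq nat) := foldr (fun b nu => tswap b nu) mu W.
Fixpoint red (W : seq nat) : bool :=
  if W is b :: W' then [&& (b.+1 < n)%N, red W' & ~~ invd (act W') b] else true.

Lemma key_tswap (nu : n.-tuple I) b p : (b.+1 < n)%N -> key (tswap b nu) p = key nu (swapnat b p).
Proof. by move=> hb; rewrite /key onth_tswap. Qed.

Lemma key_inj (nu : n.-tuple I) p q : perm_eq nu mu -> (p < n)%N -> (q < n)%N ->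
  key nu p = key nu q -> p = q.
Proof.
move=> hpe hp hq; rewrite /key.
have hu : uniq nu by rewrite (perm_uniq hpe).
have memS r : (r < n)%N -> onth nu r \in map Some mu.
  move=> hr; rewrite (onth_tnth nu (Ordinal hr)) (mem_map (@Some_inj _)).
  by rewrite -(perm_mem hpe) mem_tnth.
move=> /(congr1 (fun i => nth None (map Some mu) i)).
rewrite !nth_index ?memS // (onth_tnth nu (Ordinal hp)) (onth_tnth nu (Ordinal hq)).
case=> /(tuple_uniqP _ hu) h.
by have := congr1 val h.
Qed.

Lemma key_mu p : (p < n)%N -> key mu p = p.
Proof.
move=> hp; rewrite /key onthE index_uniq ?size_map ?size_tuple //.
by rewrite map_inj_uniq // => ? ? [].
Qed.

Lemma act_perm W : all (fun b => b.+1 < n)%N W -> perm_eq (act W) mu.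
Proof.
elim: W => [|b W IH] /=; first by move=> _; exact: perm_refl.
by case/andP=> hb hW; rewrite (perm_trans (perm_tswap _ hb)) ?IH.
Qed.

Lemma red_all W : red W -> all (fun b => b.+1 < n)%N W.
Proof. by elim: W => //= b W IH /and3P[-> /IH -> _]. Qed.

Lemma red_invd b W : red (b :: W) -> invd (act (b :: W)) b.
Proof.
case/and3P=> hb hW hn; rewrite /invd /= !key_tswap // swapnat_a swapnat_a1.
move: hn; rewrite /invd -leqNgt leq_eqVlt => /orP[/eqP|] //.
move/(key_inj (act_perm (red_all hW))) => /(_ (ltnW hb) hb) h; lia.
Qed.

Lemma red_act_mu W : red W -> act W = mu -> W = [::].
Proof.
case: W => // b W hr he; have := red_invd hr; rewrite he /invd !key_mu //.
  lia.
by case/andP: hr => hb _; apply: ltnW.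
by case/andP: hr.
Qed.

End Comb.

Lemma tswapC (T : Type) n a b (nu : n.-tuple T) : (a.+1 < n)%N -> (b.+1 < n)%N ->
  (a.+1 < b)%N || (b.+1 < a)%N -> tswap a (tswap b nu) = tswap b (tswap a nu).
Proof.
move=> ha hb /orP hf; apply: val_inj; apply: eq_from_onth => p.
rewrite !onth_tswap //; congr onth; rewrite /swapnat; repeat case: eqP; lia.
Qed.

Lemma tswap_braid (T : Type) n a (nu : n.-tuple T) : (a.+2 < n)%N ->
  tswap a (tswap a.+1 (tswap a nu)) = tswap a.+1 (tswap a (tswap a.+1 nu)).
Proof.
move=> ha; have ha' : (a.+1 < n)%N by lia.
apply: val_inj; apply: eq_from_onth => p.
rewrite !onth_tswap //; congr onth; rewrite /swapnat; repeat case: eqP; lia.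
Qed.

Lemma red_cons (I : eqType) n (mu : n.-tuple I) b W :
  red mu (b :: W) = [&& (b.+1 < n)%N, red mu W & ~~ invd mu (act mu W) b].
Proof. by []. Qed.
Lemma act_cons (I : eqType) n (mu : n.-tuple I) b W : act mu (b :: W) = tswap b (act mu W).
Proof. by []. Qed.

Lemma swapnat_lo a : swapnat a.+1 a = a.
Proof. by rewrite swapnat_o //; lia. Qed.
Lemma swapnat_hi a : swapnat a a.+2 = a.+2.
Proof. by rewrite swapnat_o //; lia. Qed.

Inductive spn (k : fieldType) (A : lmodType k) (P : A -> Prop) : A -> Prop :=
| spn0 : spn P 0
| spnG g : P g -> spn P g
| spnD u v : spn P u -> spn P v -> spn P (u + v)
| spnZ c u : spn P u -> spn P (c *: u).

Lemma spn_sum (k : fieldType) (A : lmodType k) (P : A -> Prop) (J : Type) (r : seq J)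
  (Q : pred J) (F : J -> A) : (forall j, Q j -> spn P (F j)) -> spn P (\sum_(j <- r | Q j) F j).
Proof. by move=> h; apply: big_ind => //; [exact: spn0 | exact: spnD]. Qed.

Lemma spn_mono (k : fieldType) (A : lmodType k) (P P' : A -> Prop) :
  (forall g, P g -> spn P' g) -> forall y, spn P y -> spn P' y.
Proof.
move=> h y; elim=> [|g /h //|u v _ hu _ hv|c u _ hu]; [exact: spn0|exact: spnD|exact: spnZ].
Qed.

Ltac swp := rewrite /swapnat; repeat match goal with |- context [?p == ?q] =>
  case: (eqVneq p q) => ?; try (exfalso; lia) end.

Ltac swq := do 5 rewrite ?swapnat_a ?swapnat_a1 ?swapnat_lo ?swapnat_hi.

Section Alg.
Variables (k : fieldType) (A : algType k) (I : eqType) (n : nat).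
Variables (e : n.-tuple I -> A) (x tau : nat -> A) (Ib : pred (n.-tuple I)).

Definition xw s := \prod_(p <- s) x p.
Definition tw W := \prod_(b <- W) tau b.
Definition XS := spn (fun g : A => exists2 s, all (fun p => p < n)%N s & g = xw s).

Hypothesis HIb_perm : forall nu a, Ib nu -> (a.+1 < n)%N -> Ib (tswap a nu).
Hypothesis HIb_pe : forall mu nu, Ib mu -> Ib nu -> perm_eq mu nu.
Hypothesis HIb_uniq : forall nu, Ib nu -> uniq nu.
Hypothesis Hee : forall mu nu, Ib mu -> Ib nu -> e mu * e nu = if mu == nu then e nu else 0.
Hypothesis Hxe : forall nu p, Ib nu -> (p < n)%N -> x p * e nu = e nu * x p.
Hypothesis Hxx : forall nu p q, Ib nu -> (p < n)%N -> (q < n)%N -> p != q ->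
  exists c, x p * x q * e nu = c *: (x q * x p * e nu).
Hypothesis Hte : forall nu a, Ib nu -> (a.+1 < n)%N -> tau a * e nu = e (tswap a nu) * tau a.
Hypothesis Htx : forall nu a p, Ib nu -> (a.+1 < n)%N -> (p < n)%N ->
  exists c, tau a * x p * e nu = c *: (x (swapnat a p) * tau a * e nu).
Hypothesis Htt : forall nu a, Ib nu -> (a.+1 < n)%N ->
  exists2 F, XS F & tau a * tau a * e nu = F * e nu.
Hypothesis Hcomm : forall nu a b, Ib nu -> (a.+1 < n)%N -> (b.+1 < n)%N ->
  (a.+1 < b)%N || (b.+1 < a)%N -> exists c, tau a * tau b * e nu = c *: (tau b * tau a * e nu).
Hypothesis Hbraid : forall nu a, Ib nu -> (a.+2 < n)%N ->
  tau a.+1 * tau a * tau a.+1 * e nu = tau a * tau a.+1 * tau a * e nu.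

Lemma e_idem nu : Ib nu -> e nu * e nu = e nu.
Proof. by move=> h; rewrite Hee // eqxx. Qed.

Lemma xw_e s nu : Ib nu -> all (fun p => p < n)%N s -> xw s * e nu = e nu * xw s.
Proof.
move=> hnu; elim: s => [|p s IH] /=; first by rewrite /xw big_nil mul1r mulr1.
case/andP=> hp hs; rewrite /xw big_cons -/(xw s) -mulrA IH // !mulrA Hxe //.
Qed.

Lemma tw_e mu W : Ib mu -> all (fun b => b.+1 < n)%N W ->
  Ib (act mu W) /\ tw W * e mu = e (act mu W) * tw W * e mu.
Proof.
move=> hmu; elim: W => [|b W IH] /=.
  by move=> _; split => //; rewrite /tw big_nil mulr1 mul1r e_idem.
case/andP=> hb hW; have [h1 h2] := IH hW; split; first exact: HIb_perm.
rewrite /tw !big_cons -/(tw W) -!mulrA h2 !mulrA Hte //.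
rewrite -!mulrA; congr (_ * (_ * _)); by rewrite {1}h2 -mulrA.
Qed.

Lemma tau_xw a s nu : (a.+1 < n)%N -> Ib nu -> all (fun p => p < n)%N s ->
  exists c, tau a * xw s * e nu = c *: (xw (map (swapnat a) s) * tau a * e nu).
Proof.
move=> ha hnu; elim: s => [|p s IH] /=.
  by move=> _; exists 1; rewrite scale1r /xw big_nil mulr1 mul1r.
case/andP=> hp hs; have [c1 h1] := IH hs; have [c2 h2] := Htx hnu ha hp.
exists (c2 * c1); rewrite /xw !big_cons -!/(xw _) !mulrA.
rewrite -(mulrA _ (xw s)) xw_e // mulrA h2 -!scalerAl -(mulrA _ (e nu)) -xw_e //.
rewrite -(mulrA (x _)) -(mulrA (x _)) (mulrA (tau a)) h1 -scalerAr scalerA !mulrA.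
by [].
Qed.

Lemma KL N : forall mu W a, Ib mu -> (size W <= N)%N -> red mu W -> (a.+1 < n)%N ->
  invd mu (act mu W) a ->
  exists c W', [/\ size W = (size W').+1, red mu (a :: W'), act mu (a :: W') = act mu W
                 & tw W * e mu = c *: (tau a * tw W' * e mu)].
Proof.
elim: N => [|N IHN] mu W a hmu hs hr ha hinv.
  case: W hs hr hinv => // _ _; rewrite /invd /= !key_mu ?HIb_uniq //; lia.
case: W hs hr hinv => [|b W1] hs hr hinv.
  exfalso; move: hinv; rewrite /invd /= !key_mu ?HIb_uniq //; lia.
have hbinv := red_invd (HIb_uniq hmu) hr.
have hr' := hr; move: (hr); rewrite red_cons => /and3P[hb hW1 hn1].
have hs1 : (size W1 <= N)%N by [].
have [->|hab] := eqVneq a b.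
  exists 1, W1; split => //.
  by rewrite /tw big_cons scale1r.
move: hinv hbinv; rewrite /= => hinv hbinv.
case: (boolP ((a.+1 < b) || (b.+1 < a))%N) => hfar.
  have hf : ((a.+1 < b) \/ (b.+1 < a))%N by apply/orP.
  have s1 : swapnat b a = a by apply: swapnat_o; lia.
  have s2 : swapnat b a.+1 = a.+1 by apply: swapnat_o; lia.
  have s3 : swapnat a b = b by apply: swapnat_o; lia.
  have s4 : swapnat a b.+1 = b.+1 by apply: swapnat_o; lia.
  have h1 : invd mu (act mu W1) a.
    by move: hinv; rewrite /invd !key_tswap // s1 s2.
  have [c1 [W2 [hs2 hr2 ha2 he2]]] := IHN mu W1 a hmu hs1 hW1 ha h1.
  have hr2' := hr2; move: (hr2); rewrite red_cons => /and3P[_ hW2 hn2].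
  have [hib2 he2'] := tw_e hmu (red_all hW2).
  have [c2 hc] := Hcomm hib2 hb ha (ltac:(by rewrite orbC)).
  exists (c1 * c2), (b :: W2); split.
  - by rewrite /= hs2.
  - rewrite !red_cons ha hb hW2 /=; apply/andP; split.
      by move: hn1; rewrite -ha2 act_cons /invd !key_tswap // s3 s4.
    by move: hn2; rewrite /invd !key_tswap // s1 s2.
  - by rewrite !act_cons -ha2 act_cons tswapC.
  rewrite /tw !big_cons -!/(tw _) -mulrA he2 -scalerAr !mulrA.
  by rewrite -scalerA; congr (_ *: _); rewrite -!mulrA he2' !mulrA hc -!scalerAl.
have hnf : ~ ((a.+1 < b) \/ (b.+1 < a))%N by move/orP; rewrite (negbTE hfar).
have [hb1|ha1] : b = a.+1 \/ a = b.+1 by lia.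
- subst b.
  have h1 : invd mu (act mu W1) a.
    by move: hinv hbinv; rewrite /invd !key_tswap //; swq; lia.
  have [c1 [W2 [hs2 hr2 ha2 he2]]] := IHN mu W1 a hmu hs1 hW1 ha h1.
  have hr2' := hr2; move: (hr2); rewrite red_cons => /and3P[_ hW2 hn2].
  have h2 : invd mu (act mu W2) a.+1.
    by move: hinv hbinv; rewrite -ha2 /invd /= !key_tswap //; swq; lia.
  have [c2 [W3 [hs3 hr3 ha3 he3]]] := IHN mu W2 a.+1 hmu (ltac:(lia)) hW2 hb h2.
  have hr3' := hr3; move: (hr3); rewrite red_cons => /and3P[_ hW3 hn3].
  have [hib3 he3'] := tw_e hmu (red_all hW3).
  exists (c1 * c2), (a.+1 :: a :: W3); split.
  - by rewrite /= hs2 hs3.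
  - move: hinv hbinv hn1 hn2 hn3; rewrite !act_cons -ha2 !act_cons -ha3 !red_cons !act_cons ha hb hW3 /= /invd !key_tswap //.
    by swq; lia.
  - by rewrite !act_cons -ha2 !act_cons -ha3 !act_cons tswap_braid.
  rewrite /tw !big_cons -!/(tw _) -mulrA he2 -scalerAr !mulrA.
  rewrite -(mulrA _ (tw W2)) he3 -scalerAr scalerA !mulrA; congr (_ *: _).
  by rewrite -!mulrA he3' !mulrA Hbraid.
- subst a.
  have h1 : invd mu (act mu W1) b.+1.
    by move: hinv hbinv; rewrite /invd !key_tswap //; swq; lia.
  have [c1 [W2 [hs2 hr2 ha2 he2]]] := IHN mu W1 b.+1 hmu hs1 hW1 ha h1.
  have hr2' := hr2; move: (hr2); rewrite red_cons => /and3P[_ hW2 hn2].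
  have h2 : invd mu (act mu W2) b.
    by move: hinv hbinv; rewrite -ha2 /invd /= !key_tswap //; swq; lia.
  have [c2 [W3 [hs3 hr3 ha3 he3]]] := IHN mu W2 b hmu (ltac:(lia)) hW2 hb h2.
  have hr3' := hr3; move: (hr3); rewrite red_cons => /and3P[_ hW3 hn3].
  have [hib3 he3'] := tw_e hmu (red_all hW3).
  exists (c1 * c2), (b :: b.+1 :: W3); split.
  - by rewrite /= hs2 hs3.
  - move: hinv hbinv hn1 hn2 hn3; rewrite !act_cons -ha2 !act_cons -ha3 !red_cons !act_cons ha hb hW3 /= /invd !key_tswap //.
    by swq; lia.
  - by rewrite !act_cons -ha2 !act_cons -ha3 !act_cons tswap_braid.
  rewrite /tw !big_cons -!/(tw _) -mulrA he2 -scalerAr !mulrA.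
  rewrite -(mulrA _ (tw W2)) he3 -scalerAr scalerA !mulrA; congr (_ *: _).
  by rewrite -!mulrA he3' !mulrA -Hbraid.
Qed.

End Alg.

Section Alg2.
Variables (k : fieldType) (A : algType k) (I : eqType) (n : nat).
Variables (e : n.-tuple I -> A) (x tau : nat -> A) (Ib : pred (n.-tuple I)).

Hypothesis HIb_perm : forall nu a, Ib nu -> (a.+1 < n)%N -> Ib (tswap a nu).
Hypothesis HIb_uniq : forall nu, Ib nu -> uniq nu.
Hypothesis Hee : forall mu nu, Ib mu -> Ib nu -> e mu * e nu = if mu == nu then e nu else 0.
Hypothesis Hxe : forall nu p, Ib nu -> (p < n)%N -> x p * e nu = e nu * x p.
Hypothesis Hxx : forall nu p q, Ib nu -> (p < n)%N -> (q < n)%N -> p != q ->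
  exists c, x p * x q * e nu = c *: (x q * x p * e nu).
Hypothesis Hte : forall nu a, Ib nu -> (a.+1 < n)%N -> tau a * e nu = e (tswap a nu) * tau a.
Hypothesis Htx : forall nu a p, Ib nu -> (a.+1 < n)%N -> (p < n)%N ->
  exists c, tau a * x p * e nu = c *: (x (swapnat a p) * tau a * e nu).
Hypothesis Htt : forall nu a, Ib nu -> (a.+1 < n)%N ->
  exists2 F, XS n x F & tau a * tau a * e nu = F * e nu.
Hypothesis Hcomm : forall nu a b, Ib nu -> (a.+1 < n)%N -> (b.+1 < n)%N ->
  (a.+1 < b)%N || (b.+1 < a)%N -> exists c, tau a * tau b * e nu = c *: (tau b * tau a * e nu).
Hypothesis Hbraid : forall nu a, Ib nu -> (a.+2 < n)%N ->
  tau a.+1 * tau a * tau a.+1 * e nu = tau a * tau a.+1 * tau a * e nu.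
Hypothesis Hgen : generated_by (fun g : A => (exists2 nu, Ib nu & g = e nu)
                               \/ (exists2 p, (p < n)%N & g = x p)
                               \/ (exists2 a0, (a0.+1 < n)%N & g = tau a0)).

Local Notation xw := (xw x).
Local Notation tw := (tw tau).
Let KL' := KL HIb_perm HIb_uniq Hee Hte Hcomm Hbraid.
Let tw_e' := tw_e HIb_perm Hee Hte.
Let xw_e' := xw_e Hxe.
Let tau_xw' := tau_xw Hxe Htx.
Let e_idem' := e_idem Hee.

Definition Gen mu (g : A) := exists s W,
  [/\ all (fun p => p < n)%N s, red mu W & g = xw s * tw W * e mu].

Lemma xw_cat s1 s2 : xw (s1 ++ s2) = xw s1 * xw s2.
Proof. by rewrite /Submission.xw big_cat. Qed.

Lemma gen_x mu p g : (p < n)%N -> Gen mu g -> spn (Gen mu) (x p * g).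
Proof.
move=> hp [s [W [hs hW ->]]]; apply: spnG; exists (p :: s), W; split => //=.
  by rewrite hp.
by rewrite /Submission.xw big_cons !mulrA.
Qed.

Lemma gen_e mu nu g : Ib mu -> Ib nu -> Gen mu g -> spn (Gen mu) (e nu * g).
Proof.
move=> hmu hnu [s [W [hs hW ->]]].
have [hib he] := tw_e' hmu (red_all hW).
rewrite !mulrA -xw_e' // -!mulrA he !mulrA -(mulrA _ (e nu)) Hee //.
case: eqP => _; last by rewrite mulr0 !mul0r; apply: spn0.
by rewrite -!mulrA (mulrA (e _)) -he; apply: spnG; exists s, W; split => //; rewrite !mulrA.
Qed.

Lemma spnXS mu s W F : XS n x F -> all (fun p => p < n)%N s -> red mu W ->
  spn (Gen mu) (xw s * F * (tw W * e mu)).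
Proof.
move=> hF hs hW; elim: hF => [|g [s' hs' ->]|u v _ hu _ hv|c u _ hu].
- by rewrite mulr0 mul0r; apply: spn0.
- apply: spnG; exists (s ++ s'), W; split => //; first by rewrite all_cat hs hs'.
  by rewrite xw_cat !mulrA.
- by rewrite mulrDr mulrDl; apply: spnD.
- by rewrite -scalerAr -scalerAl; apply: spnZ.
Qed.

Lemma gen_tau mu a g : Ib mu -> (a.+1 < n)%N -> Gen mu g -> spn (Gen mu) (tau a * g).
Proof.
move=> hmu ha [s [W [hs hW ->]]].
have [hib he] := tw_e' hmu (red_all hW).
have [c hc] := tau_xw' ha hib hs.
have hs' : all (fun p => p < n)%N (map (swapnat a) s).
  by rewrite all_map; apply/allP => p hp /=; rewrite swapnat_ltE //; apply: (allP hs).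
rewrite -!mulrA he !mulrA hc -!scalerAl; apply: spnZ.
rewrite -!mulrA (mulrA (e _)) -he.
case hinv: (invd mu (act mu W) a).
  have [c' [W' [_ hr' _ he']]] := KL' hmu (leqnn _) hW ha hinv.
  rewrite he' -!scalerAr; apply: spnZ.
  move: (hr'); rewrite red_cons => /and3P[_ hW' _].
  have [hib' he''] := tw_e' hmu (red_all hW').
  have [F hF hFe] := Htt hib' ha.
  have E : tau a * (tau a * tw W' * e mu) = F * (tw W' * e mu).
    rewrite -!mulrA he'' !mulrA hFe -!mulrA (mulrA (e _)) -he''.
    by [].
  by rewrite E mulrA; apply: spnXS.
apply: spnG; exists (map (swapnat a) s), (a :: W); split => //.
  by rewrite red_cons ha hW hinv.
by rewrite /Submission.tw big_cons !mulrA.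
Qed.

Lemma spn_left y mu : (forall g, Gen mu g -> spn (Gen mu) (y * g)) ->
  forall w, spn (Gen mu) w -> spn (Gen mu) (y * w).
Proof.
move=> h w; elim=> [|g /h //|u v _ hu _ hv|c u _ hu].
- by rewrite mulr0; apply: spn0.
- by rewrite mulrDr; apply: spnD.
- by rewrite -scalerAr; apply: spnZ.
Qed.

Lemma all_left y mu : Ib mu -> spn (Gen mu) (y * e mu).
Proof.
move=> hmu.
have T : forall y, forall mu, Ib mu -> forall w, spn (Gen mu) w -> spn (Gen mu) (y * w).
  apply: Hgen.
  - by move=> mu' _ w; rewrite mul1r.
  - move=> u v hu hv mu' hmu' w hw; rewrite mulrDl; apply: spnD; [exact: hu|exact: hv].
  - by move=> u v hu hv mu' hmu' w hw; rewrite -mulrA; apply: hu => //; apply: hv.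
  - by move=> c u hu mu' hmu' w hw; rewrite -scalerAl; apply: spnZ; apply: hu.
  move=> g [[nu hnu ->]|[[p hp ->]|[a0 ha0 ->]]] mu' hmu'; apply: spn_left => g' hg'.
  - exact: gen_e.
  - exact: gen_x.
  - exact: gen_tau.
apply: T => //; apply: spnG; exists [::], [::]; split => //.
by rewrite /Submission.xw /Submission.tw !big_nil !mul1r.
Qed.

Definition Gen0 mu (g : A) := exists2 s, all (fun p => p < n)%N s & g = xw s * e mu.

Lemma e_spn mu w : Ib mu -> spn (Gen mu) w -> spn (Gen0 mu) (e mu * w).
Proof.
move=> hmu; elim=> [|g [s [W [hs hW ->]]]|u v _ hu _ hv|c u _ hu].
- by rewrite mulr0; apply: spn0.
- have [hib he] := tw_e' hmu (red_all hW).
  rewrite !mulrA -xw_e' // -!mulrA he !mulrA -(mulrA _ (e mu)) Hee //.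
  case: eqP => [hact|_]; last by rewrite mulr0 !mul0r; apply: spn0.
  have hW0 := red_act_mu (HIb_uniq hmu) hW (esym hact); subst W.
  rewrite /Submission.tw big_nil mulr1 -mulrA e_idem' //; apply: spnG; exists s => //.
- by rewrite mulrDr; apply: spnD.
- by rewrite -scalerAr; apply: spnZ.
Qed.

Lemma central_spn z mu : Ib mu -> (forall y, z * y = y * z) -> spn (Gen0 mu) (z * e mu).
Proof.
move=> hmu hz.
have -> : z * e mu = e mu * (z * e mu) by rewrite mulrA -hz -mulrA e_idem'.
by apply: e_spn => //; apply: all_left.
Qed.

End Alg2.

Section Mono.
Variables (k : fieldType) (A : algType k) (I : eqType) (n : nat).
Variables (e : n.-tuple I -> A) (x : nat -> A) (mu : n.-tuple I).
Hypothesis Hxe : forall p, (p < n)%N -> x p * e mu = e mu * x p.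
Hypothesis Hxx : forall p q, (p < n)%N -> (q < n)%N -> p != q ->
  exists c, x p * x q * e mu = c *: (x q * x p * e mu).

Definition monoL (L : seq 'I_n) (t : 'I_n -> nat) := \prod_(p <- L) x p ^+ t p.

Lemma comm_e_monoL L t : GRing.comm (e mu) (monoL L t).
Proof.
apply: commr_prod => p _; apply: commrX; apply: commr_sym; exact: Hxe.
Qed.

Lemma monoL_e L t : monoL L t * e mu = e mu * monoL L t.
Proof. by have := comm_e_monoL L t; move=> ->. Qed.

Lemma xq_xpm p q m : (p < n)%N -> (q < n)%N -> p != q ->
  exists c, x q * x p ^+ m * e mu = c *: (x p ^+ m * x q * e mu).
Proof.
move=> hp hq hpq; elim: m => [|m [c2 IH]].
  by exists 1; rewrite scale1r !expr0 mulr1 mul1r.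
have [c1 h1] := Hxx hq hp (ltac:(by rewrite eq_sym)).
exists (c1 * c2).
have cm : x p ^+ m * e mu = e mu * x p ^+ m.
  have : GRing.comm (e mu) (x p ^+ m) by apply: commrX; apply: commr_sym; exact: Hxe.
  by move=> ->.
rewrite exprS mulrA -(mulrA _ (x p ^+ m)) cm mulrA h1 -scalerAl -scalerA.
congr (_ *: _); rewrite -!mulrA -cm (mulrA (x q)) IH -!scalerAr !mulrA.
by [].
Qed.

Lemma mono_step L t (q : 'I_n) : uniq L -> q \in L ->
  exists c, x q * monoL L t * e mu = c *: (monoL L (fun p => t p + (p == q))%N * e mu).
Proof.
elim: L => [|p L IH] //= /andP[hpL hu].
rewrite in_cons; case: (eqVneq q p) => [hqp _ |hqp /= hq].
  subst q.
  exists 1; rewrite scale1r /monoL !big_cons eqxx addn1 exprS mulrA.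
  congr (_ * _ * _); apply: eq_big_seq => p' hp'.
  have -> : (p' == p) = false.
    by apply/negbTE; apply: contraNneq hpL => <-.
  by rewrite addn0.
have [c1 h1] := IH hu hq.
have hqp' : (p : nat) != q by apply: contra_neq hqp => /val_inj ->.
have [c2 h2] := xq_xpm (t p) (ltn_ord p) (ltn_ord q) hqp'.
exists (c2 * c1); rewrite /monoL !big_cons -!/(monoL _ _).
have hpq : (p == q) = false by apply/negbTE; rewrite eq_sym.
rewrite hpq addn0.
rewrite mulrA -(mulrA _ (monoL L t)) monoL_e mulrA h2 -!scalerAl -scalerA.
congr (_ *: _); rewrite -!mulrA -monoL_e (mulrA (x q)) h1 -!scalerAr.
by rewrite monoL_e !mulrA.
Qed.

Definition mono (t : 'I_n -> nat) := \prod_(p < n) x p ^+ t p.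

Lemma xw_mono s : all (fun p => p < n)%N s ->
  exists c t, xw x s * e mu = c *: (mono t * e mu).
Proof.
elim: s => [|p s IH] /=.
  move=> _; exists 1, (fun _ => 0%N); rewrite scale1r /xw big_nil /mono.
  by rewrite big1 // => i _; rewrite expr0.
case/andP=> hp hs; have [c [t h]] := IH hs.
have [c' h'] := @mono_step (index_enum 'I_n) t (Ordinal hp) (index_enum_uniq _) (mem_index_enum _).
exists (c * c'), (fun i => t i + (i == Ordinal hp))%N.
rewrite /xw big_cons -/(xw x s) -mulrA h -scalerAr mulrA.
rewrite /mono; rewrite /monoL in h'; rewrite -scalerA; congr (_ *: _).
exact: h'.
Qed.

Definition monoN N (tt : n.-tuple 'I_N) := \prod_(p < n) x p ^+ tnth tt p.
Definition Rep N (y : A) := exists c : n.-tuple 'I_N -> k,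
  y = \sum_(tt : n.-tuple 'I_N) c tt *: (monoN tt * e mu).

Lemma rep_spn y : spn (fun g => exists t, g = mono t * e mu) y ->
  exists N0, forall N, (N0 <= N)%N -> Rep N y.
Proof.
elim=> [|g [t ->]|u v _ [N1 h1] _ [N2 h2]|c u _ [N1 h1]].
- exists 0%N => N _; exists (fun _ => 0); rewrite big1 // => tt _; exact: scale0r.
- exists (\max_(p < n) t p).+1 => N hN.
  have hlt p : (t p < N)%N.
    apply: leq_trans hN; rewrite ltnS; exact: (leq_bigmax_cond (F := t) p isT).
  pose tt0 : n.-tuple 'I_N := [tuple Ordinal (hlt p) | p < n].
  exists (fun tt => if tt == tt0 then 1 else 0).
  rewrite (bigD1 tt0) //= eqxx scale1r big1 ?addr0.
    congr (_ * _); apply: eq_bigr => p _; by rewrite tnth_mktuple.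
  by move=> tt /negbTE ->; rewrite scale0r.
- exists (maxn N1 N2) => N; rewrite geq_max => /andP[hN1 hN2].
  have [c1 ->] := h1 N hN1; have [c2 ->] := h2 N hN2.
  exists (fun tt => c1 tt + c2 tt); rewrite -big_split; apply: eq_bigr => tt _.
  by rewrite scalerDl.
- exists N1 => N hN; have [c1 ->] := h1 N hN.
  exists (fun tt => c * c1 tt); rewrite scaler_sumr; apply: eq_bigr => tt _.
  by rewrite scalerA.
Qed.

End Mono.

Lemma sum_count (I : finType) (V : zmodType) (F : I -> V) (s : seq I) :
  \sum_(i <- s) F i = \sum_(i : I) F i *+ count_mem i s.
Proof.
elim: s => [|y s IH].
  by rewrite big_nil big1 // => i _; rewrite mulr0n.
rewrite big_cons IH /=.
have -> : \sum_(i : I) F i *+ ((y == i) + count_mem i s)%N =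
  \sum_(i : I) F i *+ (y == i) + \sum_(i : I) F i *+ count_mem i s.
  by rewrite -big_split; apply: eq_bigr => i _; rewrite mulrnDr.
congr (_ + _); rewrite (bigD1 y) //= eqxx mulr1n big1 ?addr0 // => i hi.
by rewrite eq_sym (negbTE hi) mulr0n.
Qed.

Lemma perm_of_indep (I : finType) m (alpha : I -> 'rV[int]_m) (nu js : seq I) :
  (forall c : I -> int, \sum_(i : I) c i *: alpha i = 0 -> forall i, c i = 0) ->
  \sum_(i <- nu) alpha i = \sum_(i <- js) alpha i -> perm_eq nu js.
Proof.
move=> hind; rewrite (sum_count alpha nu) (sum_count alpha js) => h.
have h0 : \sum_(i : I) ((count_mem i nu)%:Z - (count_mem i js)%:Z) *: alpha i = 0.
  rewrite (eq_bigr (fun i => alpha i *+ count_mem i nu - alpha i *+ count_mem i js)).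
    by rewrite sumrB h subrr.
  by move=> i _; rewrite scalerBl -!scaler_nat !natz.
rewrite /perm_eq; apply/allP => i _ /=; apply/eqP.
have := hind _ h0 i; move/eqP; rewrite subr_eq0 => /eqP [] -> //.
Qed.

Lemma sgnK (k : pzRingType) b : sgn k b * sgn k b = 1.
Proof. by case: b; rewrite /sgn ?mulrNN mulr1. Qed.

Unset Implicit Arguments.
Set Strict Implicit.
Set Printing Implicit Defensive.

Theorem lemma5p5
  (k : fieldType) (hk : (2%:R : k) != 0)
  (I : finType) (a : I -> I -> int) (d : I -> nat)
  (m : nat) (alpha : I -> 'rV[int]_m) (h : I -> 'cV[int]_m) (par : I -> bool)
  (hcart : cartan_superdatum a d alpha h par)
  (Bf : 'M[int]_m) (hBf : compatible_form d alpha h Bf)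
  (t : I -> I -> nat -> nat -> k) (ht : Q_coeffs a alpha Bf par t)
  (Lam : 'rV[int]_m) (hLam : forall i, 0 <= pairing (h i) Lam)
  (js : seq I) (hjs : uniq js)
  (A : algType k) (e : (size js).-tuple I -> A) (x tau : nat -> A)
  (hA : is_cycQH a par t (fun i => `|pairing (h i) Lam|%N) alpha
           (\sum_(i <- js) alpha i) e x tau) :
  forall z : A, (forall y : A, z * y = y * z) ->
    in_sum_Pe alpha (\sum_(i <- js) alpha i) e x z.
Proof.
move=> z hz.
case: hA => hrel hgen _.
case: hrel => Hee [Hsum [Hxx [Hxe [Hte [Htx [Hdel [Htt [Hcomm [Hbraid _]]]]]]]]].
have hind : forall c : I -> int, \sum_(i : I) c i *: alpha i = 0 -> forall i, c i = 0.
  by case: hcart => _ [_ [_ [_ [_ [hi _]]]]].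
set n := size js in e Hee Hsum Hxx Hxe Hte Htx Hdel Htt Hcomm Hbraid hgen *.
set Ib := Ibeta alpha (\sum_(i <- js) alpha i) in Hee Hsum Hxx Hxe Hte Htx Hdel Htt Hcomm Hbraid hgen *.
have HIb_perm : forall nu a0, Ib nu -> (a0.+1 < n)%N -> Ib (tswap a0 nu).
  by move=> nu a0 hnu ha; rewrite /Ib /Ibeta (perm_big _ (perm_tswap nu ha)).
have HIb_pe : forall nu, Ib nu -> perm_eq nu js.
  by move=> nu /eqP hnu; exact: perm_of_indep hind hnu.
have HIb_uniq : forall nu, Ib nu -> uniq nu.
  by move=> nu /HIb_pe hp; rewrite (perm_uniq hp).
have onth_neq : forall (nu : n.-tuple I) p q, Ib nu -> (p < n)%N -> (q < n)%N -> p != q ->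
    onth nu p != onth nu q.
  move=> nu p q hnu hp hq hpq.
  rewrite (onth_tnth nu (Ordinal hp)) (onth_tnth nu (Ordinal hq)); apply/eqP => -[].
  move/(tuple_uniqP _ (HIb_uniq _ hnu)) => /(congr1 val) /= hh.
  by move: hpq; rewrite hh eqxx.
have Hxx' : forall nu p q, Ib nu -> (p < n)%N -> (q < n)%N -> p != q ->
    exists c, x p * x q * e nu = c *: (x q * x p * e nu).
  by move=> nu p q hnu hp hq hpq; eexists; apply: Hxx.
have Hxe' : forall nu p, Ib nu -> (p < n)%N -> x p * e nu = e nu * x p by [].
have Htx' : forall nu a0 p, Ib nu -> (a0.+1 < n)%N -> (p < n)%N ->
    exists c, tau a0 * x p * e nu = c *: (x (swapnat a0 p) * tau a0 * e nu).
  move=> nu a0 p hnu ha hp.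
  have [hd1 hd2] := Hdel nu a0 hnu ha.
  have hne := onth_neq nu a0 a0.+1 hnu (ltnW ha) ha (negbT (ltn_eqF (ltnSn a0))).
  rewrite (negbTE hne) /= mulrBl -scalerAl in hd1.
  rewrite (negbTE hne) /= mulrBl -scalerAl in hd2.
  move/eqP: hd1; rewrite subr_eq0 => /eqP hd1.
  move/eqP: hd2; rewrite subr_eq0 => /eqP hd2.
  case: (eqVneq p a0) => [->|hpa].
    by exists (sgn k (parv par nu a0 && parv par nu a0.+1)); rewrite swapnat_a hd2 scalerA sgnK scale1r.
  case: (eqVneq p a0.+1) => [->|hpa1].
    by exists (sgn k (parv par nu a0 && parv par nu a0.+1)); rewrite swapnat_a1 hd1.
  rewrite swapnat_o; [|exact/eqP|exact/eqP].
  by eexists; apply: Htx.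
have xw_nseq : forall r p, xw x (nseq r p) = x p ^+ r.
  by elim=> [|r IH] p; rewrite /xw ?big_nil ?expr0 //= big_cons -/(xw x _) IH exprS.
have Htt' : forall nu a0, Ib nu -> (a0.+1 < n)%N ->
    exists2 F, XS n x F & tau a0 * tau a0 * e nu = F * e nu.
  move=> nu a0 hnu ha.
  have ha' : (a0 < n)%N by apply: ltnW.
  exists (Qpol a t (tnth nu (Ordinal ha')) (tnth nu (Ordinal ha)) (x a0) (x a0.+1)).
    rewrite /Qpol; apply: spn_sum => r _; apply: spn_sum => s _; apply: spnZ; apply: spnG.
    exists (nseq r a0 ++ nseq s a0.+1).
      by rewrite all_cat !all_nseq ha ha' !orbT.
    by rewrite xw_cat !xw_nseq.
  rewrite -expr2; apply: Htt => //.
    exact: (onth_tnth nu (Ordinal ha')).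
  exact: (onth_tnth nu (Ordinal ha)).
have Hcomm' : forall nu a0 b, Ib nu -> (a0.+1 < n)%N -> (b.+1 < n)%N ->
    (a0.+1 < b)%N || (b.+1 < a0)%N ->
    exists c, tau a0 * tau b * e nu = c *: (tau b * tau a0 * e nu).
  by move=> nu a0 b hnu ha hb hab; eexists; apply: Hcomm.
have Hbraid' : forall nu a0, Ib nu -> (a0.+2 < n)%N ->
    tau a0.+1 * tau a0 * tau a0.+1 * e nu = tau a0 * tau a0.+1 * tau a0 * e nu.
  move=> nu a0 hnu ha.
  have ha1 : (a0.+1 < n)%N by apply: ltnW.
  have ha0 : (a0 < n)%N by apply: ltnW.
  have := Hbraid nu a0 (tnth nu (Ordinal ha0)) (tnth nu (Ordinal ha1)) hnu ha
    (onth_tnth nu (Ordinal ha0)) (onth_tnth nu (Ordinal ha1)).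
  have hne := onth_neq nu a0.+2 a0 hnu ha ha0 (ltac:(by rewrite eq_sym ltn_eqF // ltnW)).
  rewrite -(onth_tnth nu (Ordinal ha0)) (negbTE hne) /= mulrBl => /eqP.
  by rewrite subr_eq0 => /eqP.
have key : forall mu, Ib mu -> exists N0, forall N, (N0 <= N)%N -> Rep e x mu N (z * e mu).
  move=> mu hmu; apply: rep_spn.
  have := central_spn HIb_perm HIb_uniq Hee Hxe Hte Htx' Htt' Hcomm' Hbraid' hgen hmu hz.
  apply: spn_mono => g [s hs ->].
  have [c [tt ->]] := xw_mono (fun p hp => Hxe mu p hmu hp) (fun p q => Hxx' mu p q hmu) hs.
  by apply: spnZ; apply: spnG; exists tt.
have comb : forall L : seq (n.-tuple I), exists N0, forall N, (N0 <= N)%N ->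
    exists C : n.-tuple I -> n.-tuple 'I_N -> k, forall mu, mu \in L -> Ib mu ->
      z * e mu = \sum_(tt : n.-tuple 'I_N) C mu tt *: (monoN x tt * e mu).
  elim=> [|mu L [N1 IH]].
    by exists 0%N => N _; exists (fun _ _ => 0).
  case: (boolP (Ib mu)) => hmu.
    have [N2 h2] := key mu hmu.
    exists (maxn N1 N2) => N; rewrite geq_max => /andP[hN1 hN2].
    have [C hC] := IH N hN1; have [c hc] := h2 N hN2.
    exists (fun mu' => if mu' == mu then c else C mu') => mu'.
    rewrite in_cons; case: (eqVneq mu' mu) => [-> _ _|hne /= hin hib]; first exact: hc.
    exact: hC.
  exists N1 => N hN1; have [C hC] := IH N hN1; exists C => mu'.
  rewrite in_cons; case: (eqVneq mu' mu) => [-> _ hib|hne /= hin hib].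
    by rewrite hib in hmu.
  exact: hC.
have [N0 hN] := comb (index_enum (n.-tuple I)).
have [C hC] := hN N0 (leqnn _).
exists N0, C.
have -> : z = z * \sum_(nu | Ib nu) e nu by rewrite Hsum mulr1.
rewrite mulr_sumr; apply: eq_bigr => mu hmu.
by rewrite hC // mem_index_enum.
Qed.
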